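(* Let $n\ge1$ be an integer, $p\in(0,1)$, with all notation as in the context. Then for all real $x$, $$Q_n^{\mathrm{Lin,LC}}\Big(x+\frac12\Big)=Q(x):=\begin{cases}Q_n^{\mathrm{Interp}}(x;j)&\text{if } x\in\delta_j \text{ for some } j\in\mathbb{Z}\cap[j_*,n],\\ Q_n^{\mathrm{Lin}}\big(x+\frac12\big)&\text{otherwise.}\end{cases}$$
   Context: $q:=1-p$; $B_n$ is binomial with parameters $n,p$; $Q_n(x):=\mathbf{P}(B_n\ge x)$; $q_j:=Q_n(j)$, $p_j:=q_j-q_{j+1}=\binom nj p^jq^{n-j}$ for $j\in\mathbb{Z}$; $j_*:=\lfloor(n+1)p\rfloor+1$. $Q_n^{\mathrm{Lin}}$ is the linear interpolation of $Q_n$ over $\mathbb{Z}$, i.e. $Q_n^{\mathrm{Lin}}(x)=(1-(x-j))q_j+(x-j)q_{j+1}$ for $j\le x\le j+1$, $j\in\mathbb{Z}$; $Q_n^{\mathrm{Lin,LC}}$ is the least log-concave majorant of $Q_n^{\mathrm{Lin}}$ on $\mathbb{R}$ (smallest $g\ge Q_n^{\mathrm{Lin}}$ with $g\ge0$ and $\ln g$ concave, values $-\infty$ allowed). For integers $j_*\le j\le n$, $x_j:=j-\frac12+\frac{q_j}{p_j}+\big(\frac{q_j}{p_{j-1}}-\frac{q_j}{p_j}\big)/\ln\frac{p_{j-1}}{p_j}$ and $y_j:=j-\frac12+\frac{q_j}{p_{j-1}}+\big(\frac{q_j}{p_{j-1}}-\frac{q_j}{p_j}\big)/\ln\frac{p_{j-1}}{p_j}$;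 for integers $j\ge n+1$, $x_j:=j+\frac12$, $y_j:=j-\frac12$. For integers $j\ge j_*$, $\delta_j:=(y_j,x_j)$ (a nonempty open interval), and for $x\in\delta_j$, $$Q_n^{\mathrm{Interp}}(x;j):=Q_n^{\mathrm{Lin}}\big(y_j+\tfrac12\big)^{1-\delta}\,Q_n^{\mathrm{Lin}}\big(x_j+\tfrac12\big)^{\delta},\qquad\delta:=\frac{x-y_j}{x_j-y_j}.$$ *)

(* Defs.v *)
From Stdlib Require Import Reals Lra Lia ZArith.
Open Scope R_scope.

Definition pmf (n : nat) (p : R) (j : Z) : R :=
  if (Z.leb 0 j && Z.leb j (Z.of_nat n))%bool
  then C n (Z.to_nat j) * p ^ (Z.to_nat j) * (1 - p) ^ (n - Z.to_nat j)
  else 0.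

Definition qtail (n : nat) (p : R) (j : Z) : R :=
  sum_f_R0 (fun k => if Z.leb j (Z.of_nat k) then pmf n p (Z.of_nat k) else 0) n.

Definition QLin (n : nat) (p : R) (x : R) : R :=
  let j := Int_part x in
  (1 - (x - IZR j)) * qtail n p j + (x - IZR j) * qtail n p (j + 1).

(* a^t with the convention 0^t = 0 (used only for t in (0,1)). *)
Definition powr (a t : R) : R := if Req_EM_T a 0 then 0 else Rpower a t.

(* g >= 0 with ln g concave (ln 0 = -oo allowed). *)
Definition log_concave (g : R -> R) : Prop :=
  (forall x, 0 <= g x) /\
  forall x y t, 0 < t < 1 ->
    powr (g x) t * powr (g y) (1 - t) <= g (t * x + (1 - t) * y).

Definition LC_majorant (f g : R -> R) : Prop :=
  log_concave g /\ forall x, f x <= g x.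

Definition least_LC_majorant (f G : R -> R) : Prop :=
  LC_majorant f G /\ forall g, LC_majorant f g -> forall x, G x <= g x.

Definition jstar (n : nat) (p : R) : Z := (Int_part (INR (n + 1) * p) + 1)%Z.

Definition xj (n : nat) (p : R) (j : Z) : R :=
  if Z.leb j (Z.of_nat n) then
    IZR j - 1/2 + qtail n p j / pmf n p j
    + (qtail n p j / pmf n p (j - 1) - qtail n p j / pmf n p j)
      / ln (pmf n p (j - 1) / pmf n p j)
  else IZR j + 1/2.

Definition yj (n : nat) (p : R) (j : Z) : R :=
  if Z.leb j (Z.of_nat n) then
    IZR j - 1/2 + qtail n p j / pmf n p (j - 1)
    + (qtail n p j / pmf n p (j - 1) - qtail n p j / pmf n p j)
      / ln (pmf n p (j - 1) / pmf n p j)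
  else IZR j - 1/2.

Definition in_delta (n : nat) (p : R) (j : Z) (x : R) : Prop :=
  yj n p j < x < xj n p j.

Definition QInterp (n : nat) (p : R) (x : R) (j : Z) : R :=
  let d := (x - yj n p j) / (xj n p j - yj n p j) in
  powr (QLin n p (yj n p j + 1/2)) (1 - d) * powr (QLin n p (xj n p j + 1/2)) d.

(* Main.v *)
Require Import Defs.
From Stdlib Require Import Reals ZArith.
From Stdlib Require Import Lra Lia ClassicalEpsilon.
Open Scope R_scope.

Lemma pmf_out n p j : (j < 0 \/ j > Z.of_nat n)%Z -> pmf n p j = 0.
Proof.
  intros H; unfold pmf.
  destruct (Z.leb_spec 0 j); destruct (Z.leb_spec j (Z.of_nat n)); simpl; try lia; reflexivity.
Qed.

Lemma C_pos n k : (0 < C n k).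
Proof.
  unfold C. apply Rdiv_lt_0_compat. apply INR_fact_lt_0.
  apply Rmult_lt_0_compat; apply INR_fact_lt_0.
Qed.

Lemma pmf_pos n p j : 0 < p < 1 -> (0 <= j <= Z.of_nat n)%Z -> 0 < pmf n p j.
Proof.
  intros Hp H; unfold pmf.
  destruct (Z.leb_spec 0 j); destruct (Z.leb_spec j (Z.of_nat n)); simpl; try lia.
  apply Rmult_lt_0_compat; [apply Rmult_lt_0_compat|].
  apply C_pos. apply pow_lt; lra. apply pow_lt; lra.
Qed.

Lemma pmf_ge0 n p j : 0 < p < 1 -> 0 <= pmf n p j.
Proof.
  intros Hp.
  destruct (Z_lt_le_dec j 0). rewrite pmf_out; lia||lra.
  destruct (Z_lt_le_dec (Z.of_nat n) j). rewrite pmf_out; lia||lra.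
  left; apply pmf_pos; auto.
Qed.

Lemma sum_ind_eq (h : Z -> R) (j : Z) (m : nat) :
  sum_f_R0 (fun k => if Z.eqb (Z.of_nat k) j then h (Z.of_nat k) else 0) m =
  if (Z.leb 0 j && Z.leb j (Z.of_nat m))%bool then h j else 0.
Proof.
  induction m as [|m IH].
  - cbn [sum_f_R0]. destruct (Z.eqb_spec (Z.of_nat 0) j); destruct (Z.leb_spec 0 j); destruct (Z.leb_spec j (Z.of_nat 0)); simpl in *; subst; try lia; try reflexivity.
  - rewrite tech5, IH.
    destruct (Z.eqb_spec (Z.of_nat (S m)) j); destruct (Z.leb_spec 0 j);
    destruct (Z.leb_spec j (Z.of_nat m)); destruct (Z.leb_spec j (Z.of_nat (S m))); cbn [andb]; try lia; try lra; subst; lra.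
Qed.

Lemma qtail_rec n p j : 0 < p < 1 -> qtail n p j = pmf n p j + qtail n p (j + 1).
Proof.
  intros Hp. unfold qtail.
  assert (E: pmf n p j = sum_f_R0 (fun k => if Z.eqb (Z.of_nat k) j then pmf n p (Z.of_nat k) else 0) n).
  { rewrite sum_ind_eq.
    destruct (Z.leb_spec 0 j); destruct (Z.leb_spec j (Z.of_nat n)); simpl; try reflexivity;
      rewrite pmf_out; lia||lra. }
  rewrite E, <- sum_plus.
  apply sum_eq. intros k _.
  destruct (Z.eqb_spec (Z.of_nat k) j); destruct (Z.leb_spec j (Z.of_nat k));
    destruct (Z.leb_spec (j+1) (Z.of_nat k)); subst; try lia; lra.
Qed.

Lemma qtail_high n p j : (j > Z.of_nat n)%Z -> qtail n p j = 0.
Proof.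
  intros H. unfold qtail. rewrite <- (sum_eq (fun _ => 0)).
  - clear H. induction n as [|m IH]; simpl; lra.
  - intros k Hk. destruct (Z.leb_spec j (Z.of_nat k)); [lia|reflexivity].
Qed.

Lemma pmf_nat n p k : (k <= n)%nat -> pmf n p (Z.of_nat k) = C n k * p ^ k * (1 - p) ^ (n - k).
Proof.
  intros Hk. unfold pmf. rewrite Nat2Z.id.
  destruct (Z.leb_spec 0 (Z.of_nat k)); destruct (Z.leb_spec (Z.of_nat k) (Z.of_nat n)); simpl; try lia; reflexivity.
Qed.

Lemma qtail_low n p j : (j <= 0)%Z -> qtail n p j = 1.
Proof.
  intros H. unfold qtail.
  rewrite <- (pow1 n). replace 1 with (p + (1 - p)) at 1 by ring. rewrite binomial.
  apply sum_eq. intros k Hk. destruct (Z.leb_spec j (Z.of_nat k)); [|lia].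
  apply pmf_nat; auto.
Qed.

Lemma qtail_ge0 n p j : 0 < p < 1 -> 0 <= qtail n p j.
Proof.
  intros Hp. unfold qtail. apply cond_pos_sum. intros k.
  destruct (Z.leb (j) (Z.of_nat k)). apply pmf_ge0; auto. lra.
Qed.

Lemma qtail_mono n p j : 0 < p < 1 -> qtail n p (j+1) <= qtail n p j.
Proof.
  intros Hp. rewrite (qtail_rec n p j Hp). pose proof (pmf_ge0 n p j Hp). lra.
Qed.

Lemma qtail_pos n p j : 0 < p < 1 -> (j <= Z.of_nat n)%Z -> 0 < qtail n p j.
Proof.
  intros Hp H.
  assert (forall m : nat, 0 < qtail n p (Z.of_nat n - Z.of_nat m)).
  { induction m as [|m IH].
    - replace (Z.of_nat n - Z.of_nat 0)%Z with (Z.of_nat n) by lia.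
      rewrite qtail_rec by auto. rewrite (qtail_high n p (Z.of_nat n + 1)) by lia.
      destruct n; [|]. 
      + rewrite pmf_nat by lia. simpl. unfold C. simpl. lra.
      + pose proof (pmf_pos (S n) p (Z.of_nat (S n)) Hp). lapply H0; [|lia]. lra.
    - eapply Rlt_le_trans. apply IH.
      replace (Z.of_nat n - Z.of_nat m)%Z with ((Z.of_nat n - Z.of_nat (S m)) + 1)%Z by lia.
      apply qtail_mono; auto. }
  replace j with (Z.of_nat n - Z.of_nat (Z.to_nat (Z.of_nat n - j)))%Z by lia. apply H0.
Qed.

Lemma ratio_nat n p k : (k < n)%nat ->
  pmf n p (Z.of_nat (S k)) * INR (S k) * (1 - p) = pmf n p (Z.of_nat k) * INR (n - k) * p.
Proof.
  intros Hk. rewrite !pmf_nat by lia. rewrite pascal_step3 by lia.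
  replace (n - k)%nat with (S (n - S k)) at 2 by lia.
  simpl pow. unfold Rdiv.
  assert (INR (S k) <> 0) by (apply not_0_INR; lia).
  field; auto.
Qed.

Lemma ratio n p j : (1 <= j <= Z.of_nat n)%Z ->
  pmf n p j * IZR j * (1 - p) = pmf n p (j - 1) * IZR (Z.of_nat n - j + 1) * p.
Proof.
  intros H. set (k := Z.to_nat (j - 1)).
  assert (Ej : j = Z.of_nat (S k)) by lia.
  assert (Ej1 : (j - 1)%Z = Z.of_nat k) by lia.
  assert (En : (Z.of_nat n - j + 1)%Z = Z.of_nat (n - k)) by lia.
  rewrite Ej1, En, Ej, <- !INR_IZR_INZ. apply ratio_nat. lia.
Qed.

Lemma pmf_step_le n p k : 0 < p < 1 -> (1 <= k <= Z.of_nat n)%Z ->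
  IZR k <= INR (n + 1) * p -> pmf n p (k - 1) <= pmf n p k.
Proof.
  intros Hp Hk Hx. pose proof (ratio n p k Hk) as R.
  rewrite plus_INR in Hx. simpl in Hx.
  rewrite plus_IZR, minus_IZR, <- INR_IZR_INZ in R.
  assert (1 <= IZR k) by (apply IZR_le; lia).
  pose proof (pmf_ge0 n p (k-1) Hp). pose proof (pmf_ge0 n p k Hp).
  assert (IZR k * (1 - p) <= (INR n - IZR k + 1) * p) by lra.
  assert (0 < IZR k * (1 - p)) by nra.
  destruct (Rle_or_lt (pmf n p (k-1)) (pmf n p k)); auto.
  exfalso. nra.
Qed.

Lemma pmf_step_lt n p k : 0 < p < 1 -> (1 <= k <= Z.of_nat n)%Z ->
  INR (n + 1) * p < IZR k -> pmf n p k < pmf n p (k - 1).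
Proof.
  intros Hp Hk Hx. pose proof (ratio n p k Hk) as R.
  rewrite plus_INR in Hx. simpl in Hx.
  rewrite plus_IZR, minus_IZR, <- INR_IZR_INZ in R.
  assert (1 <= IZR k) by (apply IZR_le; lia).
  pose proof (pmf_pos n p (k-1) Hp ltac:(lia)). pose proof (pmf_pos n p k Hp ltac:(lia)).
  assert (Hl: (INR n - IZR k + 1) * p < IZR k * (1 - p)) by lra.
  assert (Hkn: IZR k <= INR n) by (rewrite INR_IZR_INZ; apply IZR_le; lia).
  destruct (Rle_or_lt (pmf n p (k-1)) (pmf n p k)); auto.
  exfalso.
  assert (pmf n p k * ((INR n - IZR k + 1) * p) < pmf n p k * (IZR k * (1 - p))) by (apply Rmult_lt_compat_l; lra).
  assert (pmf n p (k-1) * ((INR n - IZR k + 1) * p) <= pmf n p k * ((INR n - IZR k + 1) * p)) by (apply Rmult_le_compat_r; nra).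
  lra.
Qed.

Lemma jstar_ge1 n p : 0 < p < 1 -> (1 <= jstar n p)%Z.
Proof.
  intros Hp. unfold jstar. destruct (base_Int_part (INR (n+1) * p)) as [H1 H2].
  assert (0 < INR (n+1) * p) by (apply Rmult_lt_0_compat; [apply lt_0_INR; lia| lra]).
  assert (-1 < IZR (Int_part (INR (n + 1) * p))) by lra.
  apply lt_IZR in H0. lia.
Qed.

Lemma jstar_below n p k : (k < jstar n p)%Z -> IZR k <= INR (n + 1) * p.
Proof.
  intros H. unfold jstar in H. destruct (base_Int_part (INR (n+1) * p)) as [H1 H2].
  assert (IZR k <= IZR (Int_part (INR (n + 1) * p))) by (apply IZR_le; lia). lra.
Qed.

Lemma jstar_above n p k : (jstar n p <= k)%Z -> INR (n + 1) * p < IZR k.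
Proof.
  intros H. unfold jstar in H. destruct (base_Int_part (INR (n+1) * p)) as [H1 H2].
  assert (IZR (Int_part (INR (n + 1) * p)) + 1 <= IZR k).
  { rewrite <- plus_IZR. apply IZR_le; lia. } lra.
Qed.

Lemma pmf_cross n p j k : 0 < p < 1 -> (1 <= j)%Z -> (j - 1 <= k)%Z -> (j <= Z.of_nat n)%Z ->
  pmf n p (k + 1) * pmf n p (j - 1) <= pmf n p j * pmf n p k.
Proof.
  intros Hp Hj Hk Hjn.
  destruct (Z_lt_le_dec k (Z.of_nat n)) as [Hkn|Hkn].
  2:{ rewrite (pmf_out n p (k+1)) by lia. pose proof (pmf_ge0 n p j Hp). pose proof (pmf_ge0 n p k Hp). nra. }
  pose proof (ratio n p j ltac:(lia)) as R1.
  pose proof (ratio n p (k+1) ltac:(lia)) as R2.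
  replace (k + 1 - 1)%Z with k in R2 by lia.
  rewrite plus_IZR, minus_IZR, <- INR_IZR_INZ in R1.
  rewrite !plus_IZR, !minus_IZR, !plus_IZR, <- INR_IZR_INZ in R2.
  assert (Hjk : IZR j <= IZR k + 1) by (rewrite <- plus_IZR; apply IZR_le; lia).
  assert (Hkn' : IZR k + 1 <= INR n) by (rewrite INR_IZR_INZ, <- plus_IZR; apply IZR_le; lia).
  assert (Hj1 : 1 <= IZR j) by (apply IZR_le; lia).
  set (a := pmf n p (k+1)) in *. set (b := pmf n p (j-1)) in *.
  set (c := pmf n p j) in *. set (d := pmf n p k) in *.
  assert (0 <= b) by apply pmf_ge0, Hp. assert (0 <= d) by apply pmf_ge0, Hp.
  set (q := 1 - p) in *. assert (0 < q) by (unfold q; lra).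
  assert (E : (a * b - c * d) * ((IZR k + 1) * IZR j * q) =
              b * d * p * ((INR n - IZR k) * IZR j - (INR n - IZR j + 1) * (IZR k + 1))).
  { replace ((a * b - c * d) * ((IZR k + 1) * IZR j * q)) with
      ((a * (IZR k + 1) * q) * b * IZR j - (c * IZR j * q) * d * (IZR k + 1)) by ring.
    rewrite R1. replace (IZR (k + 1)) with (IZR k + 1) in R2 by (rewrite plus_IZR; ring).
    rewrite R2. ring. }
  assert (Hneg : (INR n - IZR k) * IZR j - (INR n - IZR j + 1) * (IZR k + 1) <= 0) by nra.
  assert (0 < (IZR k + 1) * IZR j * q) by (apply Rmult_lt_0_compat; [nra|lra]).
  assert (b * d * p * ((INR n - IZR k) * IZR j - (INR n - IZR j + 1) * (IZR k + 1)) <= 0).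
  { assert (0 <= b * d * p) by (apply Rmult_le_pos; [nra|lra]). nra. }
  destruct (Rle_or_lt (a*b) (c*d)); auto. exfalso. nra.
Qed.

Lemma tail_step n p j : 0 < p < 1 -> (1 <= j <= Z.of_nat n)%Z ->
  forall k, (j - 1 <= k)%Z -> qtail n p (k + 1) * pmf n p (j - 1) <= pmf n p j * qtail n p k.
Proof.
  intros Hp Hj.
  assert (forall m : nat, forall k, (Z.of_nat n - k <= Z.of_nat m)%Z -> (j - 1 <= k)%Z ->
            qtail n p (k + 1) * pmf n p (j - 1) <= pmf n p j * qtail n p k).
  { induction m as [|m IH]; intros k Hm Hk.
    - rewrite (qtail_high n p (k+1)) by lia. pose proof (pmf_ge0 n p j Hp). pose proof (qtail_ge0 n p k Hp). nra.
    - destruct (Z_lt_le_dec k (Z.of_nat n)).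
      + specialize (IH (k+1)%Z ltac:(lia) ltac:(lia)).
        rewrite (qtail_rec n p (k+1) Hp). rewrite (qtail_rec n p k Hp).
        pose proof (pmf_cross n p j k Hp ltac:(lia) Hk ltac:(lia)). nra.
      + rewrite (qtail_high n p (k+1)) by lia. pose proof (pmf_ge0 n p j Hp). pose proof (qtail_ge0 n p k Hp). nra. }
  intros k Hk. apply (H (Z.to_nat (Z.of_nat n - k))); lia.
Qed.

Lemma tail_bound n p j : 0 < p < 1 -> (1 <= j <= Z.of_nat n)%Z ->
  qtail n p j * (pmf n p (j - 1) - pmf n p j) <= pmf n p j * pmf n p (j - 1).
Proof.
  intros Hp Hj. pose proof (tail_step n p j Hp Hj j ltac:(lia)).
  pose proof (qtail_rec n p j Hp) as E. rewrite E in H. rewrite E. nra.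
Qed.

Lemma Int_part_eq t k : IZR k <= t < IZR k + 1 -> Int_part t = k.
Proof. intros H. symmetry. apply Int_part_spec. lra. Qed.

Lemma Int_part_bounds t : IZR (Int_part t) <= t < IZR (Int_part t) + 1.
Proof. destruct (base_Int_part t). lra. Qed.

Lemma QLin_seg n p k t : 0 < p < 1 -> IZR k <= t <= IZR k + 1 ->
  QLin n p t = qtail n p k - (t - IZR k) * pmf n p k.
Proof.
  intros Hp H. unfold QLin. pose proof (qtail_rec n p k Hp) as E.
  destruct (Rlt_or_le t (IZR k + 1)).
  - rewrite (Int_part_eq t k) by lra. rewrite E. ring.
  - assert (t = IZR (k + 1)) by (rewrite plus_IZR; lra). subst t.
    rewrite (Int_part_eq _ (k+1)) by (rewrite plus_IZR; lra).
    rewrite E, !plus_IZR. ring.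
Qed.

Lemma QLin_gen n p t : 0 < p < 1 ->
  QLin n p t = qtail n p (Int_part t) - (t - IZR (Int_part t)) * pmf n p (Int_part t).
Proof. intros Hp. apply QLin_seg; auto. pose proof (Int_part_bounds t). lra. Qed.

Lemma QLin_low n p t : 0 < p < 1 -> t <= 0 -> QLin n p t = 1.
Proof.
  intros Hp H. unfold QLin. pose proof (Int_part_bounds t).
  assert (IZR (Int_part t) <= 0) by lra. apply le_IZR in H1.
  destruct (Z.eq_dec (Int_part t) 0) as [E|E].
  - assert (t = 0) by (rewrite E in H0; lra). rewrite E. rewrite (qtail_low n p 0) by lia. subst t. simpl. ring.
  - rewrite !qtail_low by lia. ring.
Qed.

Lemma QLin_high n p t : 0 < p < 1 -> INR n + 1 <= t -> QLin n p t = 0.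
Proof.
  intros Hp H. unfold QLin. pose proof (Int_part_bounds t).
  assert (INR n < IZR (Int_part t)) by lra. rewrite INR_IZR_INZ in H1.
  apply lt_IZR in H1. rewrite !qtail_high by lia. ring.
Qed.

Lemma QLin_pos n p t : 0 < p < 1 -> t < INR n + 1 -> 0 < QLin n p t.
Proof.
  intros Hp H. unfold QLin. pose proof (Int_part_bounds t).
  assert (IZR (Int_part t) < INR n + 1) by lra. rewrite INR_IZR_INZ, <- plus_IZR in H1.
  apply lt_IZR in H1.
  pose proof (qtail_pos n p (Int_part t) Hp ltac:(lia)).
  pose proof (qtail_ge0 n p (Int_part t + 1) Hp). nra.
Qed.

Lemma QLin_ge0 n p t : 0 < p < 1 -> 0 <= QLin n p t.
Proof.
  intros Hp. unfold QLin. pose proof (Int_part_bounds t).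
  pose proof (qtail_ge0 n p (Int_part t) Hp).
  pose proof (qtail_ge0 n p (Int_part t + 1) Hp). nra.
Qed.

Lemma ln_lt_sub1 x : 0 < x -> x <> 1 -> ln x < x - 1.
Proof.
  intros H1 H2. assert (ln x <> 0).
  { intro E. apply H2. rewrite <- (exp_ln x H1), E. apply exp_0. }
  pose proof (exp_ineq1 (ln x) H). rewrite exp_ln in H0; auto. lra.
Qed.

Lemma ln_le_sub1 x : 0 < x -> ln x <= x - 1.
Proof.
  intros H. pose proof (exp_ineq1_le (ln x)). rewrite exp_ln in H0; auto. lra.
Qed.

Definition gfun (r : R) := (1 - r) / (- ln r).

Lemma ln_neg r : 0 < r < 1 -> ln r < 0.
Proof. intros H. rewrite <- ln_1. apply ln_increasing; lra. Qed.

Lemma gfun_bounds r : 0 < r < 1 -> r < gfun r < 1.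
Proof.
  intros H. pose proof (ln_neg r H). unfold gfun. split.
  - apply Rmult_lt_reg_r with (- ln r). lra. unfold Rdiv. rewrite Rmult_assoc, Rinv_l by lra.
    pose proof (ln_lt_sub1 (/ r) ltac:(apply Rinv_0_lt_compat; lra) ltac:(intro E; assert (r = 1) by (rewrite <- (Rinv_inv r), E; apply Rinv_1); lra)).
    rewrite ln_Rinv in H1 by lra.
    assert (r * (- ln r) < r * (/ r - 1)) by (apply Rmult_lt_compat_l; lra).
    replace (r * (/ r - 1)) with (1 - r) in H2 by (field; lra). lra.
  - apply Rmult_lt_reg_r with (- ln r). lra. unfold Rdiv. rewrite Rmult_assoc, Rinv_l by lra.
    pose proof (ln_lt_sub1 r ltac:(lra) ltac:(lra)). lra.
Qed.

Lemma exp_tangent c x : exp c * (1 + x - c) <= exp x.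
Proof.
  replace x with (c + (x - c)) at 2 by ring. rewrite exp_plus.
  pose proof (exp_ineq1_le (x - c)). pose proof (exp_pos c). nra.
Qed.

Lemma gfun_mono r' r : 0 < r' <= r -> r < 1 -> gfun r' <= gfun r.
Proof.
  intros H1 H2. destruct (Req_dec r' r) as [E|E]. subst; lra.
  assert (Hr : r' < r) by lra.
  set (A := - ln r). set (A' := - ln r').
  assert (HA : 0 < A) by (unfold A; pose proof (ln_neg r ltac:(lra)); lra).
  assert (HAA : A < A') by (unfold A, A'; pose proof (ln_increasing r' r ltac:(lra) Hr); lra).
  assert (Er : exp (- A) = r) by (unfold A; rewrite Ropp_involutive; apply exp_ln; lra).
  assert (Er' : exp (- A') = r') by (unfold A'; rewrite Ropp_involutive; apply exp_ln; lra).
  pose proof (exp_tangent (-A) (-A')) as T1. pose proof (exp_tangent (-A) 0) as T2.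
  rewrite exp_0, Er, Er' in *.
  set (l := A / A').
  assert (Hl : 0 < l < 1).
  { unfold l. split. apply Rdiv_lt_0_compat; lra.
    apply Rmult_lt_reg_r with A'. lra. unfold Rdiv. rewrite Rmult_assoc, Rinv_l by lra. lra. }
  assert (HlA : l * A' = A) by (unfold l; field; lra).
  assert (r <= l * r' + (1 - l)) by nra.
  unfold gfun. fold A A'.
  assert (1 - r >= l * (1 - r')) by lra.
  unfold Rdiv. apply Rmult_le_reg_r with (A * A'). nra.
  replace ((1 - r') * / A' * (A * A')) with ((1 - r') * A) by (field; lra).
  replace ((1 - r) * / A * (A * A')) with ((1 - r) * A') by (field; lra).
  rewrite <- HlA. nra.
Qed.

Definition inrange n p j := (jstar n p <= j <= Z.of_nat n)%Z.
Definition uu n p j := qtail n p j / pmf n p (j - 1).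
Definition vv n p j := qtail n p j / pmf n p j.
Definition rr n p j := pmf n p j / pmf n p (j - 1).
Definition MM n p j := vv n p j * gfun (rr n p j).
Definition aa n p j := IZR j + uu n p j - MM n p j.
Definition bb n p j := IZR j + vv n p j - MM n p j.
Definition ss n p j := - / MM n p j.


Lemma inrange_facts n p j : 0 < p < 1 -> inrange n p j ->
  (1 <= j <= Z.of_nat n)%Z /\ 0 < pmf n p j /\ 0 < pmf n p (j-1) /\ pmf n p j < pmf n p (j - 1)
  /\ 0 < qtail n p j.
Proof.
  intros Hp [H1 H2]. pose proof (jstar_ge1 n p Hp).
  repeat split; try lia.
  apply pmf_pos; auto; lia. apply pmf_pos; auto; lia.
  apply pmf_step_lt; auto. lia. apply jstar_above; auto.
  apply qtail_pos; auto.
Qed.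

Lemma rr_bounds n p j : 0 < p < 1 -> inrange n p j -> 0 < rr n p j < 1.
Proof.
  intros Hp H. destruct (inrange_facts n p j Hp H) as (_ & A & B & C & _).
  unfold rr. split. apply Rdiv_lt_0_compat; lra.
  apply Rmult_lt_reg_r with (pmf n p (j-1)); auto. unfold Rdiv. rewrite Rmult_assoc, Rinv_l; lra.
Qed.

Lemma vv_pos n p j : 0 < p < 1 -> inrange n p j -> 0 < vv n p j.
Proof.
  intros Hp H. destruct (inrange_facts n p j Hp H) as (_ & A & B & C & D).
  unfold vv. apply Rdiv_lt_0_compat; lra.
Qed.

Lemma uu_eq n p j : 0 < p < 1 -> inrange n p j -> uu n p j = rr n p j * vv n p j.
Proof.
  intros Hp H. destruct (inrange_facts n p j Hp H) as (_ & A & B & C & D).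
  unfold uu, rr, vv. field. lra.
Qed.

Lemma vv_tail n p j : 0 < p < 1 -> inrange n p j -> vv n p j * (1 - rr n p j) <= 1.
Proof.
  intros Hp H. destruct (inrange_facts n p j Hp H) as (Hj & A & B & C & D).
  pose proof (tail_bound n p j Hp Hj) as T.
  unfold vv, rr.
  replace (qtail n p j / pmf n p j * (1 - pmf n p j / pmf n p (j - 1))) with
    (qtail n p j * (pmf n p (j - 1) - pmf n p j) / (pmf n p j * pmf n p (j-1))) by (field; lra).
  apply Rmult_le_reg_r with (pmf n p j * pmf n p (j-1)). nra.
  unfold Rdiv. rewrite Rmult_assoc, Rinv_l by nra. lra.
Qed.

Lemma ab_bounds n p j : 0 < p < 1 -> inrange n p j ->
  IZR j - 1 < aa n p j < IZR j /\ IZR j < bb n p j < IZR j + 1.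
Proof.
  intros Hp H. pose proof (rr_bounds n p j Hp H). pose proof (vv_pos n p j Hp H).
  pose proof (uu_eq n p j Hp H). pose proof (vv_tail n p j Hp H).
  pose proof (gfun_bounds _ H0).
  unfold aa, bb, MM. rewrite H2.
  set (r := rr n p j) in *. set (v := vv n p j) in *. set (g := gfun r) in *.
  assert (r * v < v * g) by nra. assert (v * g < v) by nra.
  assert (v * (g - r) < v * (1 - r)) by (apply Rmult_lt_compat_l; lra).
  assert (v * (1 - g) < v * (1 - r)) by (apply Rmult_lt_compat_l; lra).
  repeat split; nra.
Qed.

Lemma MM_mono n p j : 0 < p < 1 -> inrange n p j -> inrange n p (j+1) ->
  MM n p (j+1) <= MM n p j.
Proof.
  intros Hp H H'.
  destruct (inrange_facts n p j Hp H) as (Hj & A & B & C & D).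
  destruct (inrange_facts n p (j+1) Hp H') as (Hj' & A' & B' & C' & D').
  replace (j + 1 - 1)%Z with j in * by lia.
  pose proof (rr_bounds n p j Hp H). pose proof (rr_bounds n p (j+1) Hp H').
  pose proof (vv_pos n p (j+1) Hp H'). pose proof (vv_tail n p (j+1) Hp H').
  assert (Hrr : rr n p (j+1) <= rr n p j).
  { pose proof (pmf_cross n p j j Hp ltac:(lia) ltac:(lia) ltac:(lia)).
    unfold rr. replace (j + 1 - 1)%Z with j by lia.
    apply Rmult_le_reg_r with (pmf n p j * pmf n p (j-1)). nra.
    replace (pmf n p (j + 1) / pmf n p j * (pmf n p j * pmf n p (j - 1))) with
      (pmf n p (j+1) * pmf n p (j-1)) by (field; lra).
    replace (pmf n p j / pmf n p (j - 1) * (pmf n p j * pmf n p (j - 1))) with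
      (pmf n p j * pmf n p j) by (field; lra). lra. }
  assert (Ev : vv n p j = 1 + rr n p (j+1) * vv n p (j+1)).
  { unfold vv, rr. replace (j + 1 - 1)%Z with j by lia. rewrite (qtail_rec n p j Hp). field. lra. }
  pose proof (gfun_mono (rr n p (j+1)) (rr n p j) ltac:(lra) ltac:(lra)).
  pose proof (gfun_bounds _ H0).
  unfold MM. rewrite Ev.
  set (r := rr n p j) in *. set (r' := rr n p (j+1)) in *. set (v' := vv n p (j+1)) in *.
  nra.
Qed.

Lemma MM_pos n p j : 0 < p < 1 -> inrange n p j -> 0 < MM n p j.
Proof.
  intros Hp H. pose proof (vv_pos n p j Hp H). pose proof (rr_bounds n p j Hp H). pose proof (gfun_bounds _ (rr_bounds n p j Hp H)).
  unfold MM. nra.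
Qed.

Lemma yj_eq n p j : 0 < p < 1 -> inrange n p j -> yj n p j = aa n p j - 1/2.
Proof.
  intros Hp H. destruct (inrange_facts n p j Hp H) as (Hj & A & B & C & D).
  pose proof (rr_bounds n p j Hp H) as Hr. pose proof (ln_neg _ Hr).
  unfold yj. destruct (Z.leb_spec j (Z.of_nat n)); [|lia].
  unfold aa, MM, gfun. fold (uu n p j) (vv n p j).
  replace (pmf n p (j - 1) / pmf n p j) with (/ rr n p j) by (unfold rr; field; lra).
  rewrite ln_Rinv by lra. rewrite (uu_eq n p j Hp H). field. lra.
Qed.

Lemma xj_eq n p j : 0 < p < 1 -> inrange n p j -> xj n p j = bb n p j - 1/2.
Proof.
  intros Hp H. destruct (inrange_facts n p j Hp H) as (Hj & A & B & C & D).
  pose proof (rr_bounds n p j Hp H) as Hr. pose proof (ln_neg _ Hr).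
  unfold xj. destruct (Z.leb_spec j (Z.of_nat n)); [|lia].
  unfold bb, MM, gfun. fold (uu n p j) (vv n p j).
  replace (pmf n p (j - 1) / pmf n p j) with (/ rr n p j) by (unfold rr; field; lra).
  rewrite ln_Rinv by lra. rewrite (uu_eq n p j Hp H). field. lra.
Qed.

Lemma QLin_aa n p j : 0 < p < 1 -> inrange n p j -> QLin n p (aa n p j) = pmf n p (j-1) * MM n p j.
Proof.
  intros Hp H. destruct (inrange_facts n p j Hp H) as (Hj & A & B & C & D).
  destruct (ab_bounds n p j Hp H) as [Ha Hb].
  rewrite (QLin_seg n p (j-1)) by (auto; rewrite minus_IZR; lra).
  rewrite (qtail_rec n p (j-1) Hp). replace (j - 1 + 1)%Z with j by lia.
  unfold aa. rewrite minus_IZR. unfold uu. field. lra.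
Qed.

Lemma QLin_bb n p j : 0 < p < 1 -> inrange n p j -> QLin n p (bb n p j) = pmf n p j * MM n p j.
Proof.
  intros Hp H. destruct (inrange_facts n p j Hp H) as (Hj & A & B & C & D).
  destruct (ab_bounds n p j Hp H) as [Ha Hb].
  rewrite (QLin_seg n p j) by (auto; lra).
  unfold bb. unfold vv. field. lra.
Qed.

Lemma ss_chord n p j : 0 < p < 1 -> inrange n p j ->
  ss n p j * (bb n p j - aa n p j) = ln (rr n p j).
Proof.
  intros Hp H. pose proof (rr_bounds n p j Hp H) as Hr. pose proof (ln_neg _ Hr).
  pose proof (vv_pos n p j Hp H). pose proof (MM_pos n p j Hp H).
  unfold ss, bb, aa. rewrite (uu_eq n p j Hp H).
  replace (IZR j + vv n p j - MM n p j - (IZR j + rr n p j * vv n p j - MM n p j))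
    with (vv n p j * (1 - rr n p j)) by ring.
  unfold MM, gfun in *. field. split; lra.
Qed.

Lemma bb_le_aa n p j : 0 < p < 1 -> inrange n p j -> inrange n p (j+1) -> bb n p j <= aa n p (j+1).
Proof.
  intros Hp H H'. pose proof (MM_mono n p j Hp H H').
  destruct (inrange_facts n p j Hp H) as (Hj & A & B & C & D).
  unfold bb, aa. rewrite plus_IZR.
  assert (uu n p (j+1) = vv n p j - 1).
  { unfold uu, vv. replace (j + 1 - 1)%Z with j by lia. rewrite (qtail_rec n p j Hp). field. lra. }
  lra.
Qed.

Lemma sep n p j j' : 0 < p < 1 -> inrange n p j -> inrange n p j' -> (j < j')%Z ->
  bb n p j <= aa n p j'.
Proof.
  intros Hp H H' Hl. destruct (Z.eq_dec j' (j+1)) as [E|E].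
  - subst. apply bb_le_aa; auto.
  - destruct (ab_bounds n p j Hp H). destruct (ab_bounds n p j' Hp H').
    assert (IZR j + 1 <= IZR j' - 1) by (rewrite <- plus_IZR, <- minus_IZR; apply IZR_le; lia).
    lra.
Qed.

Lemma uniq_delta n p j j' t : 0 < p < 1 -> inrange n p j -> inrange n p j' ->
  aa n p j < t < bb n p j -> aa n p j' < t < bb n p j' -> j = j'.
Proof.
  intros Hp H H' T T'. destruct (Z.lt_trichotomy j j') as [L|[L|L]]; auto.
  - pose proof (sep n p j j' Hp H H' L). lra.
  - pose proof (sep n p j' j Hp H' H L). lra.
Qed.

Definition pick n p t : option Z :=
  match excluded_middle_informative (exists j, inrange n p j /\ aa n p j < t < bb n p j) with
  | left H => Some (proj1_sig (constructive_indefinite_description _ H))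
  | right _ => None
  end.

Lemma pick_some n p t j : pick n p t = Some j -> inrange n p j /\ aa n p j < t < bb n p j.
Proof.
  unfold pick. destruct excluded_middle_informative as [H|H]; [|discriminate].
  destruct (constructive_indefinite_description _ H) as [j' Hj']. simpl. intros E; inversion E; subst; auto.
Qed.

Lemma pick_none n p t : pick n p t = None -> forall j, inrange n p j -> ~ (aa n p j < t < bb n p j).
Proof.
  unfold pick. destruct excluded_middle_informative as [H|H]; [discriminate|].
  intros _ j Hj Ht. apply H. exists j; auto.
Qed.

Lemma pick_of n p t j : 0 < p < 1 -> inrange n p j -> aa n p j < t < bb n p j -> pick n p t = Some j.
Proof.
  intros Hp Hj Ht. destruct (pick n p t) eqn:E.
  - apply pick_some in E. destruct E. f_equal. eapply uniq_delta; eauto.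
  - exfalso. eapply pick_none; eauto.
Qed.

Lemma pick_none_of n p t : (forall j, inrange n p j -> ~ (aa n p j < t < bb n p j)) -> pick n p t = None.
Proof.
  intros H. destruct (pick n p t) eqn:E; auto. apply pick_some in E. destruct E. exfalso; eapply H; eauto.
Qed.

Definition phi n p j t := ln (pmf n p (j-1) * MM n p j) + ss n p j * (t - aa n p j).

Definition Gf n p t : R :=
  match pick n p t with Some j => exp (phi n p j t) | None => QLin n p t end.

Definition Dd n p t : R :=
  if Rlt_dec t 0 then 0 else
  match pick n p t with Some j => ss n p j | None => - pmf n p (Int_part t) / QLin n p t end.

Definition ff n p t := ln (Gf n p t).

Definition inrb n p j := (Z.leb (jstar n p) j && Z.leb j (Z.of_nat n))%bool.

Lemma inrb_spec n p j : inrb n p j = true <-> inrange n p j.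
Proof.
  unfold inrb, inrange. destruct (Z.leb_spec (jstar n p) j); destruct (Z.leb_spec j (Z.of_nat n)); simpl;
  split; intros; try lia; try discriminate; auto.
Qed.

Lemma inrb_false n p j : inrb n p j = false -> ~ inrange n p j.
Proof. intros H C. apply inrb_spec in C. congruence. Qed.

Definition lo n p k := if inrb n p k then bb n p k else IZR k.
Definition hi n p k := if inrb n p (k+1) then aa n p (k+1) else IZR k + 1.

Lemma seg_bounds n p k : 0 < p < 1 -> IZR k <= lo n p k <= hi n p k /\ hi n p k <= IZR k + 1.
Proof.
  intros Hp. unfold lo, hi.
  destruct (inrb n p k) eqn:E1; destruct (inrb n p (k+1)) eqn:E2;
    try apply inrb_spec in E1; try apply inrb_spec in E2.
  - pose proof (bb_le_aa n p k Hp E1 E2). pose proof (ab_bounds n p k Hp E1).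
    pose proof (ab_bounds n p (k+1) Hp E2). rewrite plus_IZR in *. lra.
  - pose proof (ab_bounds n p k Hp E1). lra.
  - pose proof (ab_bounds n p (k+1) Hp E2). rewrite plus_IZR in *. lra.
  - lra.
Qed.

Lemma seg_pick n p k t : 0 < p < 1 -> lo n p k <= t <= hi n p k -> pick n p t = None.
Proof.
  intros Hp Ht. apply pick_none_of. intros j Hj Hd.
  pose proof (seg_bounds n p k Hp). pose proof (ab_bounds n p j Hp Hj).
  destruct (Z_lt_le_dec j k).
  - assert (IZR j + 1 <= IZR k) by (rewrite <- plus_IZR; apply IZR_le; lia). lra.
  - destruct (Z.eq_dec j k).
    + subst. unfold lo in Ht. apply inrb_spec in Hj. rewrite Hj in Ht. lra.
    + destruct (Z.eq_dec j (k+1)).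
      * subst. unfold hi in Ht. apply inrb_spec in Hj. rewrite Hj in Ht. lra.
      * assert (IZR k + 1 <= IZR j - 1) by (rewrite <- plus_IZR, <- minus_IZR; apply IZR_le; lia). lra.
Qed.

Definition Pp (f D : R -> R) z w :=
  D w <= D z /\ D w * (w - z) <= f w - f z /\ f w - f z <= D z * (w - z).

Lemma Pp_trans f D z m w : z < m -> m < w -> Pp f D z m -> Pp f D m w -> Pp f D z w.
Proof.
  unfold Pp. intros H1 H2 (A1 & B1 & C1) (A2 & B2 & C2). split; [lra|split].
  - assert (D w * (m - z) <= D m * (m - z)) by (apply Rmult_le_compat_r; lra). nra.
  - assert (D m * (w - m) <= D z * (w - m)) by (apply Rmult_le_compat_r; lra). nra.
Qed.

Lemma ln_sub_le x y : 0 < x -> 0 < y -> ln y - ln x <= (y - x) / x.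
Proof.
  intros Hx Hy. pose proof (ln_le_sub1 (y / x) ltac:(apply Rdiv_lt_0_compat; lra)).
  unfold Rdiv in H. rewrite ln_mult, ln_Rinv in H by (try apply Rinv_0_lt_compat; lra).
  replace ((y - x) / x) with (y * / x - 1) by (field; lra). lra.
Qed.

Lemma lin_piece n p k z w : 0 < p < 1 -> (0 <= k <= Z.of_nat n)%Z ->
  lo n p k <= z -> z < w -> w <= hi n p k -> w < INR n + 1 -> Pp (ff n p) (Dd n p) z w.
Proof.
  intros Hp Hk Hz Hzw Hw Hwn.
  destruct (seg_bounds n p k Hp) as [[B1 B2] B3].
  assert (Pz : pick n p z = None) by (apply (seg_pick n p k); lra).
  assert (Pw : pick n p w = None) by (apply (seg_pick n p k); lra).
  assert (H0k : 0 <= IZR k) by (apply IZR_le; lia).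
  set (l := fun t => qtail n p k - (t - IZR k) * pmf n p k).
  assert (Lz : QLin n p z = l z) by (apply QLin_seg; auto; lra).
  assert (Lw : QLin n p w = l w) by (apply QLin_seg; auto; lra).
  assert (Pw0 : 0 < l w) by (rewrite <- Lw; apply QLin_pos; auto).
  pose proof (pmf_ge0 n p k Hp) as Pk.
  assert (Hlzw : l w <= l z) by (unfold l; nra).
  assert (Pz0 : 0 < l z) by lra.
  assert (Dz : Dd n p z = - pmf n p k / l z).
  { unfold Dd. destruct (Rlt_dec z 0); [lra|]. rewrite Pz, Lz. rewrite (Int_part_eq z k) by lra. reflexivity. }
  assert (Dw : Dd n p w <= - pmf n p k / l w).
  { unfold Dd. destruct (Rlt_dec w 0); [lra|]. rewrite Pw, Lw.
    destruct (Rlt_or_le w (IZR k + 1)).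
    - rewrite (Int_part_eq w k) by lra. lra.
    - assert (Ew : w = IZR (k + 1)) by (rewrite plus_IZR; lra).
      rewrite (Int_part_eq w (k+1)) by (rewrite plus_IZR in *; lra).
      assert (Hnr : ~ inrange n p (k+1)).
      { intro C. unfold hi in Hw. apply inrb_spec in C. rewrite C in Hw.
        apply inrb_spec in C. pose proof (ab_bounds n p (k+1) Hp C). rewrite plus_IZR in *. lra. }
      assert (Hkn : (k + 1 <= Z.of_nat n)%Z).
      { assert (IZR k < IZR (Z.of_nat n)) by (rewrite <- INR_IZR_INZ; lra). match goal with K : IZR k < _ |- _ => apply lt_IZR in K end. lia. }
      assert (Hjs : (k + 1 < jstar n p)%Z) by (unfold inrange in Hnr; lia).
      pose proof (pmf_step_le n p (k+1) Hp ltac:(lia) (jstar_below n p (k+1) Hjs)).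
      replace (k + 1 - 1)%Z with k in H0 by lia.
      unfold Rdiv. apply Rmult_le_compat_r. left; apply Rinv_0_lt_compat; auto. lra. }
  unfold Pp, ff, Gf. rewrite Pz, Pw, Lz, Lw, Dz.
  assert (E1 : - pmf n p k / l w <= - pmf n p k / l z).
  { unfold Rdiv. rewrite !Ropp_mult_distr_l_reverse. apply Ropp_le_contravar.
    apply Rmult_le_compat_l; auto. apply Rinv_le_contravar; auto. }
  assert (Edif : l w - l z = - pmf n p k * (w - z)) by (unfold l; ring).
  pose proof (ln_sub_le (l z) (l w) Pz0 Pw0) as U.
  pose proof (ln_sub_le (l w) (l z) Pw0 Pz0) as V.
  rewrite Edif in U. replace (l z - l w) with (pmf n p k * (w - z)) in V by lra.
  split; [lra|split].
  - assert (Dd n p w * (w - z) <= - pmf n p k / l w * (w - z)) by (apply Rmult_le_compat_r; lra).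
    replace (- pmf n p k / l w * (w - z)) with (- (pmf n p k * (w - z) / l w)) in H by (field; lra).
    lra.
  - replace (- pmf n p k / l z * (w - z)) with (- pmf n p k * (w - z) / l z) by (field; lra). lra.
Qed.

Lemma bit_vals n p j t : 0 < p < 1 -> inrange n p j -> aa n p j <= t <= bb n p j ->
  ff n p t = phi n p j t /\ Dd n p t = ss n p j.
Proof.
  intros Hp Hj Ht.
  destruct (inrange_facts n p j Hp Hj) as (Hj1 & A & B & C & D).
  destruct (ab_bounds n p j Hp Hj) as [Ha Hb].
  pose proof (MM_pos n p j Hp Hj) as HM.
  assert (H0 : (0 <= IZR j - 1)) by (assert (1 <= IZR j) by (apply IZR_le; lia); lra).
  assert (Hnt : ~ t < 0) by lra.
  destruct (Req_dec t (aa n p j)) as [Ea|Ea].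
  - assert (Pt : pick n p t = None).
    { apply (seg_pick n p (j-1)); auto. pose proof (seg_bounds n p (j-1) Hp).
      unfold hi in *. replace (j - 1 + 1)%Z with j in * by lia.
      assert (E: inrb n p j = true) by (apply inrb_spec; auto). rewrite E in *. lra. }
    unfold ff, Gf, Dd. rewrite Pt. destruct (Rlt_dec t 0); [lra|].
    subst t. rewrite QLin_aa by auto. rewrite (Int_part_eq _ (j-1)) by (rewrite minus_IZR; lra).
    unfold phi, ss. split. ring. field. lra.
  - destruct (Req_dec t (bb n p j)) as [Eb|Eb].
    + assert (Pt : pick n p t = None).
      { apply (seg_pick n p j); auto. pose proof (seg_bounds n p j Hp).
        unfold lo in *. assert (E: inrb n p j = true) by (apply inrb_spec; auto). rewrite E in *. lra. }
      unfold ff, Gf, Dd. rewrite Pt. destruct (Rlt_dec t 0); [lra|].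
      subst t. rewrite QLin_bb by auto. rewrite (Int_part_eq _ j) by lra.
      unfold phi. rewrite ss_chord by auto. split.
      * unfold rr. rewrite !ln_mult by (try apply Rdiv_lt_0_compat; lra).
        unfold Rdiv. rewrite ln_mult, ln_Rinv by (try apply Rinv_0_lt_compat; lra). ring.
      * unfold ss. field. lra.
    + assert (Pt : pick n p t = Some j) by (apply pick_of; auto; lra).
      unfold ff, Gf, Dd. rewrite Pt. destruct (Rlt_dec t 0); [lra|].
      rewrite ln_exp. auto.
Qed.

Lemma bit_piece n p j z w : 0 < p < 1 -> inrange n p j -> aa n p j <= z -> z < w -> w <= bb n p j ->
  Pp (ff n p) (Dd n p) z w.
Proof.
  intros Hp Hj Hz Hzw Hw.
  destruct (bit_vals n p j z Hp Hj ltac:(lra)) as [F1 D1].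
  destruct (bit_vals n p j w Hp Hj ltac:(lra)) as [F2 D2].
  unfold Pp. rewrite F1, F2, D1, D2. unfold phi. repeat split; lra.
Qed.

Lemma block_piece n p k z w : 0 < p < 1 -> (0 <= k <= Z.of_nat n)%Z ->
  lo n p k <= z -> z < w -> w <= lo n p (k+1) -> w < INR n + 1 -> Pp (ff n p) (Dd n p) z w.
Proof.
  intros Hp Hk Hz Hzw Hw Hwn.
  destruct (seg_bounds n p k Hp) as [[B1 B2] B3].
  destruct (Rle_or_lt w (hi n p k)) as [C1|C1].
  - eapply lin_piece; eauto.
  - destruct (inrb n p (k+1)) eqn:E.
    + apply inrb_spec in E as Hj.
      assert (Hh : hi n p k = aa n p (k+1)) by (unfold hi; rewrite E; auto).
      assert (Hl : lo n p (k+1) = bb n p (k+1)) by (unfold lo; rewrite E; auto).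
      destruct (Rle_or_lt (hi n p k) z) as [C2|C2].
      * eapply bit_piece; eauto; lra.
      * apply Pp_trans with (hi n p k); auto.
        -- eapply lin_piece; eauto; lra.
        -- eapply bit_piece; eauto; lra.
    + assert (hi n p k = IZR k + 1) by (unfold hi; rewrite E; auto).
      assert (lo n p (k+1) = IZR (k + 1)) by (unfold lo; rewrite E; auto).
      rewrite plus_IZR in H0. lra.
Qed.

Lemma base_piece n p z w : 0 < p < 1 -> z < w -> w <= 0 -> Pp (ff n p) (Dd n p) z w.
Proof.
  intros Hp Hzw Hw.
  assert (PN : forall t, t <= 0 -> pick n p t = None).
  { intros t Ht. apply pick_none_of. intros j Hj Hd. destruct (ab_bounds n p j Hp Hj).
    destruct (inrange_facts n p j Hp Hj) as (Hj1 & _).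
    assert (1 <= IZR j) by (apply IZR_le; lia). lra. }
  assert (FF : forall t, t <= 0 -> ff n p t = 0).
  { intros t Ht. unfold ff, Gf. rewrite PN by auto. rewrite QLin_low by auto. apply ln_1. }
  assert (DD : forall t, t <= 0 -> Dd n p t <= 0).
  { intros t Ht. unfold Dd. destruct (Rlt_dec t 0). lra. rewrite PN by auto.
    rewrite QLin_low by auto. pose proof (pmf_ge0 n p (Int_part t) Hp). unfold Rdiv. lra. }
  assert (Dz : Dd n p z = 0) by (unfold Dd; destruct (Rlt_dec z 0); lra).
  unfold Pp. rewrite Dz, FF, FF by lra. pose proof (DD w Hw).
  repeat split; try lra. nra.
Qed.

Lemma lo_zero n p : 0 < p < 1 -> lo n p 0 = 0.
Proof.
  intros Hp. unfold lo. destruct (inrb n p 0) eqn:E; auto.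
  apply inrb_spec in E. pose proof (jstar_ge1 n p Hp). unfold inrange in E. lia.
Qed.

Lemma lo_top n p : lo n p (Z.of_nat n + 1) = INR n + 1.
Proof.
  unfold lo. destruct (inrb n p (Z.of_nat n + 1)) eqn:E.
  - apply inrb_spec in E. unfold inrange in E. lia.
  - rewrite plus_IZR, <- INR_IZR_INZ. auto.
Qed.

Lemma chain n p : 0 < p < 1 -> forall z w, z < w -> w < INR n + 1 -> Pp (ff n p) (Dd n p) z w.
Proof.
  intros Hp.
  assert (forall K : nat, (K <= n + 1)%nat -> forall z w, z < w -> w <= lo n p (Z.of_nat K) ->
            w < INR n + 1 -> Pp (ff n p) (Dd n p) z w).
  { induction K as [|K IH]; intros HK z w Hzw Hw Hwn.
    - simpl in Hw. rewrite lo_zero in Hw by auto. apply base_piece; auto.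
    - replace (Z.of_nat (S K)) with (Z.of_nat K + 1)%Z in Hw by lia.
      destruct (Rle_or_lt w (lo n p (Z.of_nat K))) as [C|C].
      + apply IH; auto; lia.
      + destruct (Rle_or_lt (lo n p (Z.of_nat K)) z) as [C2|C2].
        * apply (block_piece n p (Z.of_nat K)); auto. lia.
        * apply Pp_trans with (lo n p (Z.of_nat K)); auto.
          -- apply IH; try lia; lra.
          -- apply (block_piece n p (Z.of_nat K)); try lia; lra. }
  intros z w Hzw Hw. apply (H (n+1)%nat); auto.
  replace (Z.of_nat (n + 1)) with (Z.of_nat n + 1)%Z by lia. rewrite lo_top. lra.
Qed.

Lemma exp_mono x y : x <= y -> exp x <= exp y.
Proof. intros [H|H]. left; apply exp_increasing; auto. subst; lra. Qed.

Lemma Gf_nonneg n p t : 0 < p < 1 -> 0 <= Gf n p t.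
Proof.
  intros Hp. unfold Gf. destruct (pick n p t). left; apply exp_pos. apply QLin_ge0; auto.
Qed.

Lemma Gf_high n p t : 0 < p < 1 -> INR n + 1 <= t -> Gf n p t = 0.
Proof.
  intros Hp Ht. unfold Gf.
  assert (pick n p t = None).
  { apply pick_none_of. intros j Hj Hd. destruct (ab_bounds n p j Hp Hj).
    destruct (inrange_facts n p j Hp Hj) as (Hj1 & _).
    assert (IZR j <= INR n) by (rewrite INR_IZR_INZ; apply IZR_le; lia). lra. }
  rewrite H. apply QLin_high; auto.
Qed.

Lemma phi_interp n p j t : 0 < p < 1 -> inrange n p j ->
  phi n p j t = (1 - (t - aa n p j) / (bb n p j - aa n p j)) * ln (pmf n p (j-1) * MM n p j)
              + (t - aa n p j) / (bb n p j - aa n p j) * ln (pmf n p j * MM n p j).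
Proof.
  intros Hp Hj.
  destruct (inrange_facts n p j Hp Hj) as (Hj1 & A & B & C & D).
  destruct (ab_bounds n p j Hp Hj) as [Ha Hb].
  pose proof (MM_pos n p j Hp Hj) as HM.
  pose proof (ss_chord n p j Hp Hj) as Ch.
  assert (El : ln (pmf n p j * MM n p j) = ln (pmf n p (j-1) * MM n p j) + ln (rr n p j)).
  { unfold rr. rewrite !ln_mult by (try apply Rdiv_lt_0_compat; lra).
    unfold Rdiv. rewrite ln_mult, ln_Rinv by (try apply Rinv_0_lt_compat; lra). ring. }
  rewrite El, <- Ch. unfold phi. field. lra.
Qed.

Lemma Gf_ge n p t : 0 < p < 1 -> QLin n p t <= Gf n p t.
Proof.
  intros Hp. unfold Gf. destruct (pick n p t) as [j|] eqn:E; [|lra].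
  apply pick_some in E as [Hj Ht].
  destruct (inrange_facts n p j Hp Hj) as (Hj1 & A & B & C & D).
  destruct (ab_bounds n p j Hp Hj) as [Ha Hb].
  pose proof (MM_pos n p j Hp Hj) as HM.
  assert (Hq : 0 < QLin n p t).
  { apply QLin_pos; auto. assert (IZR j <= INR n) by (rewrite INR_IZR_INZ; apply IZR_le; lia). lra. }
  rewrite <- (exp_ln _ Hq). apply exp_mono.
  destruct (Rle_or_lt t (IZR j)).
  - pose proof (QLin_aa n p j Hp Hj) as Qa.
    assert (Dif : QLin n p t - QLin n p (aa n p j) = - pmf n p (j-1) * (t - aa n p j)).
    { rewrite (QLin_seg n p (j-1) t) by (auto; rewrite minus_IZR; lra).
      rewrite (QLin_seg n p (j-1) (aa n p j)) by (auto; rewrite minus_IZR; lra). ring. }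
    pose proof (ln_sub_le (QLin n p (aa n p j)) (QLin n p t) ltac:(rewrite Qa; nra) Hq) as U.
    rewrite Dif, Qa in U. unfold phi, ss.
    replace (- pmf n p (j - 1) * (t - aa n p j) / (pmf n p (j - 1) * MM n p j))
      with (- / MM n p j * (t - aa n p j)) in U by (field; lra). lra.
  - pose proof (QLin_bb n p j Hp Hj) as Qb.
    assert (Dif : QLin n p t - QLin n p (bb n p j) = - pmf n p j * (t - bb n p j)).
    { rewrite (QLin_seg n p j t) by (auto; lra).
      rewrite (QLin_seg n p j (bb n p j)) by (auto; lra). ring. }
    pose proof (ln_sub_le (QLin n p (bb n p j)) (QLin n p t) ltac:(rewrite Qb; nra) Hq) as U.
    rewrite Dif, Qb in U.
    replace (- pmf n p j * (t - bb n p j) / (pmf n p j * MM n p j))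
      with (ss n p j * (t - bb n p j)) in U by (unfold ss; field; lra).
    assert (phi n p j t = phi n p j (bb n p j) + ss n p j * (t - bb n p j)) by (unfold phi; ring).
    rewrite H0. rewrite (phi_interp n p j (bb n p j)) by auto.
    replace ((bb n p j - aa n p j) / (bb n p j - aa n p j)) with 1 by (field; lra). lra.
Qed.

Lemma Gf_pos n p t : 0 < p < 1 -> t < INR n + 1 -> 0 < Gf n p t.
Proof.
  intros Hp Ht. pose proof (Gf_ge n p t Hp). pose proof (QLin_pos n p t Hp Ht). lra.
Qed.

Lemma ff_concave n p x y t : 0 < p < 1 -> 0 < t < 1 -> x < INR n + 1 -> y < INR n + 1 ->
  t * ff n p x + (1 - t) * ff n p y <= ff n p (t * x + (1 - t) * y).
Proof.
  intros Hp Ht Hx Hy. set (z := t * x + (1 - t) * y).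
  assert (Hz : z < INR n + 1) by (unfold z; nra).
  assert (Sup : forall a, a < INR n + 1 -> ff n p a <= ff n p z + Dd n p z * (a - z)).
  { intros a Ha. destruct (Rtotal_order a z) as [L|[L|L]].
    - destruct (chain n p Hp a z L Hz) as (_ & B & _). lra.
    - subst. lra.
    - destruct (chain n p Hp z a L Ha) as (_ & _ & C). lra. }
  pose proof (Sup x Hx). pose proof (Sup y Hy).
  assert (t * (x - z) + (1 - t) * (y - z) = 0) by (unfold z; ring).
  assert (t * ff n p x <= t * (ff n p z + Dd n p z * (x - z))) by (apply Rmult_le_compat_l; lra).
  assert ((1-t) * ff n p y <= (1-t) * (ff n p z + Dd n p z * (y - z))) by (apply Rmult_le_compat_l; lra).
  assert (t * (ff n p z + Dd n p z * (x - z)) + (1-t) * (ff n p z + Dd n p z * (y - z)) = ff n p z)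
    by (replace (t * (ff n p z + Dd n p z * (x - z)) + (1-t) * (ff n p z + Dd n p z * (y - z)))
          with (ff n p z + Dd n p z * (t * (x - z) + (1 - t) * (y - z))) by ring; rewrite H1; ring).
  lra.
Qed.

Lemma Gf_lc n p : 0 < p < 1 -> log_concave (Gf n p).
Proof.
  intros Hp. split. intros; apply Gf_nonneg; auto.
  intros x y t Ht. pose proof (Gf_nonneg n p (t * x + (1 - t) * y) Hp).
  unfold powr. destruct (Req_EM_T (Gf n p x) 0). lra.
  destruct (Req_EM_T (Gf n p y) 0). lra.
  assert (Hx : x < INR n + 1).
  { destruct (Rlt_or_le x (INR n + 1)); auto. exfalso. apply n0. apply Gf_high; auto. }
  assert (Hy : y < INR n + 1).
  { destruct (Rlt_or_le y (INR n + 1)); auto. exfalso. apply n1. apply Gf_high; auto. }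
  assert (Hz : t * x + (1 - t) * y < INR n + 1) by nra.
  pose proof (ff_concave n p x y t Hp Ht Hx Hy). unfold ff in H0.
  unfold Rpower. rewrite <- exp_plus.
  rewrite <- (exp_ln (Gf n p (t * x + (1 - t) * y))) by (apply Gf_pos; auto).
  apply exp_mono. lra.
Qed.

Lemma Gf_least n p g : 0 < p < 1 -> LC_majorant (QLin n p) g -> forall t, Gf n p t <= g t.
Proof.
  intros Hp [[Hg0 Hlc] Hmaj] t.
  unfold Gf. destruct (pick n p t) as [j|] eqn:E; [|apply Hmaj].
  apply pick_some in E as [Hj Ht].
  destruct (inrange_facts n p j Hp Hj) as (Hj1 & A & B & C & D).
  destruct (ab_bounds n p j Hp Hj) as [Ha Hb].
  pose proof (MM_pos n p j Hp Hj) as HM.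
  set (d := (t - aa n p j) / (bb n p j - aa n p j)).
  assert (Hd : 0 < d < 1).
  { unfold d. split. apply Rdiv_lt_0_compat; lra.
    apply Rmult_lt_reg_r with (bb n p j - aa n p j). lra.
    unfold Rdiv. rewrite Rmult_assoc, Rinv_l by lra. lra. }
  specialize (Hlc (bb n p j) (aa n p j) d Hd).
  replace (d * bb n p j + (1 - d) * aa n p j) with t in Hlc by (unfold d; field; lra).
  pose proof (Hmaj (aa n p j)) as Ga. pose proof (Hmaj (bb n p j)) as Gb.
  rewrite QLin_aa in Ga by auto. rewrite QLin_bb in Gb by auto.
  unfold powr in Hlc.
  destruct (Req_EM_T (g (bb n p j)) 0). nra.
  destruct (Req_EM_T (g (aa n p j)) 0). nra.
  eapply Rle_trans; [|apply Hlc].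
  rewrite (phi_interp n p j t Hp Hj). fold d.
  pose proof (Rle_Rpower_l (pmf n p j * MM n p j) (g (bb n p j)) d ltac:(lra) ltac:(split; nra)).
  pose proof (Rle_Rpower_l (pmf n p (j-1) * MM n p j) (g (aa n p j)) (1 - d) ltac:(lra) ltac:(split; nra)).
  assert (exp ((1 - d) * ln (pmf n p (j - 1) * MM n p j) + d * ln (pmf n p j * MM n p j)) =
          Rpower (pmf n p j * MM n p j) d * Rpower (pmf n p (j-1) * MM n p j) (1 - d)).
  { unfold Rpower. rewrite <- exp_plus. f_equal. ring. }
  rewrite H1.
  apply Rmult_le_compat; try (unfold Rpower; left; apply exp_pos); auto.
Qed.

Theorem proposition2p10 (n : nat) (p : R) :
  (1 <= n)%nat -> 0 < p < 1 ->
  exists G : R -> R,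
    least_LC_majorant (QLin n p) G /\
    forall x : R,
      (forall j : Z, (jstar n p <= j <= Z.of_nat n)%Z -> in_delta n p j x ->
         G (x + 1/2) = QInterp n p x j) /\
      ((forall j : Z, (jstar n p <= j <= Z.of_nat n)%Z -> ~ in_delta n p j x) ->
         G (x + 1/2) = QLin n p (x + 1/2)).
Proof.
  intros Hn Hp. exists (Gf n p). split.
  - split. split. apply Gf_lc; auto. intros t; apply Gf_ge; auto.
    intros g Hg. apply Gf_least; auto.
  - intros x. split.
    + intros j Hj Hd. change (inrange n p j) in Hj.
      unfold in_delta in Hd. rewrite (yj_eq n p j Hp Hj), (xj_eq n p j Hp Hj) in Hd.
      destruct (inrange_facts n p j Hp Hj) as (Hj1 & A & B & C & D).
      destruct (ab_bounds n p j Hp Hj) as [Ha Hb].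
      pose proof (MM_pos n p j Hp Hj) as HM.
      unfold Gf. rewrite (pick_of n p (x + 1/2) j Hp Hj) by lra.
      unfold QInterp. rewrite (yj_eq n p j Hp Hj), (xj_eq n p j Hp Hj).
      replace (aa n p j - 1 / 2 + 1 / 2) with (aa n p j) by ring.
      replace (bb n p j - 1 / 2 + 1 / 2) with (bb n p j) by ring.
      rewrite QLin_aa, QLin_bb by auto.
      unfold powr. destruct (Req_EM_T (pmf n p (j - 1) * MM n p j) 0). nra.
      destruct (Req_EM_T (pmf n p j * MM n p j) 0). nra.
      rewrite (phi_interp n p j (x + 1/2) Hp Hj).
      unfold Rpower. rewrite <- exp_plus. f_equal.
      replace ((x - (aa n p j - 1 / 2)) / (bb n p j - 1 / 2 - (aa n p j - 1 / 2)))
        with ((x + 1/2 - aa n p j) / (bb n p j - aa n p j)) by (field; lra).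
      ring.
    + intros H. unfold Gf. rewrite pick_none_of; auto.
      intros j Hj Hd. apply (H j Hj). unfold in_delta.
      rewrite (yj_eq n p j Hp Hj), (xj_eq n p j Hp Hj). lra.
Qed.
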